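(* A matrix $A\in\mathcal{C}_n$ is irreducible with respect to the cone $S_+(n)$ if and only if the linear span of the set of minimal zeros of $A$ equals $\mathbb{R}^n$. In particular, in that case $A$ has at least $n$ linearly independent minimal zeros.
   Context: $\mathcal{C}_n$ denotes the cone of copositive matrices: real symmetric $n\times n$ matrices $A$ with $x^TAx\ge 0$ for all $x\in\mathbb{R}^n_+$. $S_+(n)$ is the cone of positive semidefinite $n\times n$ matrices. For $A\in\mathcal{C}_n$, a zero of $A$ is a nonzero vector $u\in\mathbb{R}^n_+$ with $u^TAu=0$; its support is $\operatorname{Supp}(u)=\{i:u_i\ne0\}$; a zero $u$ is minimal if there is no zero $v$ with $\operatorname{Supp}(v)\subsetneq\operatorname{Supp}(u)$. For $A\in\mathcal{C}_n$ and $\mathcal{M}\subset\mathcal{C}_n$, $A$ is irreducible with respect to $\mathcal{M}$ if there do not exist $\gamma>0$ and $M\in\mathcal{M}\setminus\{0\}$ with $A-\gamma M\in\mathcal{C}_n$. *)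

(* Defs.v *)
From HB Require Import structures.
From mathcomp Require Import all_boot all_order all_algebra.
Set Implicit Arguments. Unset Strict Implicit. Unset Printing Implicit Defensive.
Import Order.TTheory GRing.Theory Num.Theory.
Local Open Scope ring_scope.

Section Copositive.
Variables (R : rcfType) (n : nat).

Definition qform (A : 'M[R]_n) (x : 'cV[R]_n) : R := (x^T *m A *m x) 0 0.

Definition nonneg_vec (x : 'cV[R]_n) : Prop := forall i, 0 <= x i 0.

Definition copositive (A : 'M[R]_n) : Prop :=
  A^T = A /\ forall x : 'cV[R]_n, nonneg_vec x -> 0 <= qform A x.

Definition psd (M : 'M[R]_n) : Prop :=
  M^T = M /\ forall x : 'cV[R]_n, 0 <= qform M x.

Definition is_zero_of (A : 'M[R]_n) (u : 'cV[R]_n) : Prop :=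
  nonneg_vec u /\ u <> 0 /\ qform A u = 0.

Definition supp (u : 'cV[R]_n) : {set 'I_n} := [set i | u i 0 != 0].

Definition minimal_zero (A : 'M[R]_n) (u : 'cV[R]_n) : Prop :=
  is_zero_of A u /\
  ~ (exists v, is_zero_of A v /\ supp v \proper supp u).

(* A irreducible with respect to the set Mset (A assumed copositive) *)
Definition irreducible_wrt (Mset : 'M[R]_n -> Prop) (A : 'M[R]_n) : Prop :=
  ~ (exists (gamma : R) (M : 'M[R]_n),
       0 < gamma /\ Mset M /\ M <> 0 /\ copositive (A - gamma *: M)).

Definition in_span (S : 'cV[R]_n -> Prop) (x : 'cV[R]_n) : Prop :=
  exists (k : nat) (c : 'I_k -> R) (u : 'I_k -> 'cV[R]_n),
    (forall i, S (u i)) /\ x = \sum_(i < k) c i *: u i.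

Definition spans_all (S : 'cV[R]_n -> Prop) : Prop :=
  forall x : 'cV[R]_n, in_span S x.

Definition lin_indep (k : nat) (u : 'I_k -> 'cV[R]_n) : Prop :=
  forall c : 'I_k -> R, \sum_(i < k) c i *: u i = 0 -> forall i, c i = 0.

End Copositive.

(* Main.v *)
Require Import Defs.
From HB Require Import structures.
From mathcomp Require Import all_boot all_order all_algebra.
From mathcomp Require Import ring lra.
From Stdlib Require Import Classical.
Set Implicit Arguments. Unset Strict Implicit. Unset Printing Implicit Defensive.
Import Order.TTheory GRing.Theory Num.Theory.
Local Open Scope ring_scope.

Section Aux.
Variables (R : rcfType) (n : nat).
Implicit Types (A M : 'M[R]_n) (x y z u v w d e : 'cV[R]_n).

Definition bf A x y : R := (x^T *m A *m y) 0 0.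
Definition dot x y : R := (x^T *m y) 0 0.

Lemma dotE x y : dot x y = \sum_i x i 0 * y i 0.
Proof. by rewrite /dot mxE; apply: eq_bigr => i _; rewrite mxE. Qed.

Lemma dotC x y : dot x y = dot y x.
Proof. by rewrite !dotE; apply: eq_bigr => i _; rewrite mulrC. Qed.

Lemma dotDr x y z : dot x (y + z) = dot x y + dot x z.
Proof. by rewrite /dot mulmxDr mxE. Qed.
Lemma dotZr a x y : dot x (a *: y) = a * dot x y.
Proof. by rewrite /dot -scalemxAr mxE. Qed.
Lemma dotNr x y : dot x (- y) = - dot x y.
Proof. by rewrite /dot mulmxN mxE. Qed.
Lemma dotBr x y z : dot x (y - z) = dot x y - dot x z.
Proof. by rewrite dotDr dotNr. Qed.

Lemma bfDl A x y z : bf A (x + y) z = bf A x z + bf A y z.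
Proof. by rewrite /bf linearD /= !mulmxDl mxE. Qed.
Lemma bfDr A x y z : bf A z (x + y) = bf A z x + bf A z y.
Proof. by rewrite /bf mulmxDr mxE. Qed.
Lemma bfZl A a x z : bf A (a *: x) z = a * bf A x z.
Proof. by rewrite /bf linearZ /= -!scalemxAl mxE. Qed.
Lemma bfZr A a x z : bf A z (a *: x) = a * bf A z x.
Proof. by rewrite /bf -scalemxAr mxE. Qed.
Lemma bfNl A x z : bf A (- x) z = - bf A x z.
Proof. by rewrite -scaleN1r bfZl mulN1r. Qed.
Lemma bfNr A x z : bf A z (- x) = - bf A z x.
Proof. by rewrite -scaleN1r bfZr mulN1r. Qed.
Lemma bf0r A x : bf A x 0 = 0.
Proof. by rewrite /bf mulmx0 mxE. Qed.
Lemma bf0l A x : bf A 0 x = 0.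
Proof. by rewrite /bf linear0 mul0mx mul0mx mxE. Qed.

Lemma bf_sym A x y : A^T = A -> bf A x y = bf A y x.
Proof.
move=> sA; rewrite /bf.
transitivity (((x^T *m A *m y)^T) 0 0); first by rewrite [RHS]mxE.
by rewrite !trmx_mul trmxK sA mulmxA.
Qed.

Lemma qformE A x : qform A x = bf A x x. Proof. by []. Qed.

Lemma qD A x y : A^T = A -> qform A (x + y) = qform A x + 2 * bf A x y + qform A y.
Proof.
move=> sA; rewrite !qformE bfDl !bfDr (bf_sym x y sA) (bf_sym y x sA); ring.
Qed.

Lemma qZ A a x : qform A (a *: x) = a ^+ 2 * qform A x.
Proof. by rewrite !qformE bfZl bfZr expr2 mulrA. Qed.

Lemma qN A x : qform A (- x) = qform A x.
Proof. by rewrite !qformE bfNl bfNr opprK. Qed.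

Lemma qDZ A x t e : A^T = A ->
  qform A (x + t *: e) = qform A x + 2 * t * bf A x e + t ^+ 2 * qform A e.
Proof. by move=> sA; rewrite qD // qZ bfZr mulrA. Qed.


Lemma nonnegD x y : nonneg_vec x -> nonneg_vec y -> nonneg_vec (x + y).
Proof. by move=> hx hy i; rewrite mxE addr_ge0. Qed.
Lemma nonnegZ a x : 0 <= a -> nonneg_vec x -> nonneg_vec (a *: x).
Proof. by move=> ha hx i; rewrite mxE mulr_ge0. Qed.

Lemma NB A x d : copositive A -> nonneg_vec x -> nonneg_vec d ->
  qform A d <= 0 -> 0 <= bf A x d.
Proof.
move=> [sA cA] hx hd hqd; rewrite leNgt; apply/negP => hb.
set b := bf A x d in hb.
have hq0 := cA x hx.
set t := (qform A x + 1) / (- (2 * b)).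
have ht : 0 <= t.
  rewrite /t divr_ge0 //; first by rewrite addr_ge0.
  rewrite oppr_ge0; lra.
have h2 : 2 * t * b = - (qform A x + 1).
  by rewrite /t; field; rewrite lt_eqF.
have := cA (x + t *: d) (nonnegD hx (nonnegZ ht hd)).
rewrite qDZ // -/b h2.
have : 0 <= t ^+ 2 by apply: sqr_ge0.
nra.
Qed.
Lemma EXIT x e : nonneg_vec x -> (exists j, e j 0 < 0) ->
  exists t, 0 <= t /\ nonneg_vec (x + t *: e) /\
    (exists i, e i 0 < 0 /\ (x + t *: e) i 0 = 0) /\
    (forall j, e j 0 < 0 -> t * (- e j 0) <= x j 0).
Proof.
move=> hx [j0 hj0].
pose F := fun i : 'I_n => x i 0 / - e i 0.
case: (@arg_minP _ _ _ j0 (fun i => e i 0 < 0) F hj0) => i hi hmin.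
have key : forall j, e j 0 < 0 -> F i * (- e j 0) <= x j 0.
  move=> j hj; have := hmin j hj; rewrite /F => h.
  have hej : 0 < - e j 0 by rewrite oppr_gt0.
  by rewrite -(ler_pdivlMr _ _ hej).
exists (F i); split; first by rewrite /F divr_ge0 // oppr_ge0 ltW.
split.
  move=> j; rewrite !mxE; case: (ltP (e j 0) 0) => hj.
    have := key j hj; lra.
  by rewrite addr_ge0 // mulr_ge0 // /F divr_ge0 // oppr_ge0 ltW.
split; last by [].
exists i; split => //; rewrite !mxE /F.
field; by rewrite lt_eqF.
Qed.

Lemma nz_coord d : d != 0 -> exists j, d j 0 != 0.
Proof.
move=> hd; apply/existsP; apply: contraNT hd; rewrite negb_exists => /forallP h.
by apply/eqP/matrixP => i j; rewrite ord1 mxE; apply/eqP; move: (h i); rewrite negbK.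
Qed.

Lemma neg_or_nonneg e : (exists j, e j 0 < 0) \/ nonneg_vec e.
Proof.
case: (boolP [exists j, e j 0 < 0]) => [/existsP h|]; first by left.
rewrite negb_exists => /forallP h; right => j; by rewrite leNgt h.
Qed.

Lemma LINE A x d : copositive A -> nonneg_vec x -> d != 0 -> qform A d <= 0 ->
  exists e, (e = d \/ e = - d) /\ (exists j, e j 0 < 0) /\ bf A x e <= 0.
Proof.
move=> cA hx hd hq; have [j hj] := nz_coord hd.
have hqN : qform A (- d) <= 0 by rewrite qN.
case: (lerP (bf A x d) 0) => hb.
  case: (neg_or_nonneg d) => hn; first by exists d; split; [left|split].
  have hb0 := NB cA hx hn hq.
  exists (- d); split; first by right.
  split; last by rewrite bfNr; lra.
  exists j; rewrite mxE oppr_lt0 lt_def hj; exact: hn.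
case: (neg_or_nonneg (- d)) => hn.
  exists (- d); split; first by right.
  by split => //; rewrite bfNr; lra.
have := NB cA hx hn hqN; rewrite bfNr; lra.
Qed.

Lemma dot0r x : dot x 0 = 0.
Proof. by rewrite /dot mulmx0 mxE. Qed.

Lemma ZO A w : copositive A -> (forall u, minimal_zero A u -> dot w u = 0) ->
  forall u, is_zero_of A u -> dot w u = 0.
Proof.
move=> cA hmin u hz.
suff H : forall m u, (#|supp u| <= m)%N -> is_zero_of A u -> dot w u = 0.
  exact: (H _ u (leqnn _) hz).
elim=> [|m IH] {}u hc {}hz; (case: (classic (minimal_zero A u)) => hm; first exact: hmin).
  have [v [hv hp]] : exists v, is_zero_of A v /\ supp v \proper supp u.
    by apply: NNPP => h; apply: hm.
  have := proper_card hp; rewrite ltnNge; move: hc; rewrite leqn0 => /eqP ->.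
  by rewrite leq0n.
have [v [hv hp]] : exists v, is_zero_of A v /\ supp v \proper supp u.
  by apply: NNPP => h; apply: hm.
have hcv : (#|supp v| <= m)%N.
  by rewrite -ltnS; exact: leq_trans (proper_card hp) hc.
have dv := IH v hcv hv.
case: hz => hu [hu0 hqu]; case: (hv) => hvn [hv0 hqv].
case/properP: hp => hsub [k hku hkv].
have [j hj] := nz_coord (introN eqP hv0).
have hj' : (- v) j 0 < 0 by rewrite mxE oppr_lt0 lt_def hj hvn.
have [t [ht [hy [[i [hi hyi]] _]]]] := EXIT hu (ex_intro _ j hj').
have [sA cA'] := cA.
have hbf : 0 <= bf A u v.
  have := cA' _ (nonnegD hu hvn); rewrite qD // hqu hqv; lra.
have hvi : v i 0 != 0 by move: hi; rewrite mxE oppr_lt0 => /gt_eqF ->.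
have hui : i \in supp u by apply: (subsetP hsub); rewrite inE.
have ht0 : 0 < t.
  rewrite lt_def ht andbT; apply/negP => /eqP t0; move: hyi hui.
  by rewrite t0 scale0r addr0 inE => ->; rewrite eqxx.
have hqy : qform A (u + t *: - v) = - (2 * t * bf A u v).
  by rewrite qDZ // hqu qN hqv bfNr; ring.
have hb0 : bf A u v = 0.
  have := cA' _ hy; rewrite hqy => h.
  apply/eqP; rewrite eq_le hbf andbT; nra.
have decomp : dot w u = dot w (u + t *: - v) + t * dot w v.
  by rewrite dotDr dotZr dotNr; ring.
rewrite decomp dv mulr0 addr0.
case: (eqVneq (u + t *: - v) 0) => [->|hy0]; first exact: dot0r.
apply: IH; last first.
  by split=> //; split; [apply/eqP|rewrite hqy hb0; ring].
have : supp (u + t *: - v) \proper supp u.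
  apply/properP; split.
    apply/subsetP => l; rewrite !inE; apply: contraNN => /eqP hul.
    have : l \notin supp v by apply/negP => /(subsetP hsub); rewrite inE hul eqxx.
    by rewrite inE negbK !mxE hul => /eqP ->; rewrite oppr0 mulr0 addr0.
  by exists i => //; rewrite inE hyi eqxx.
by move/proper_card => h; rewrite -ltnS; exact: leq_trans h hc.
Qed.

Lemma dot_ge0 x : 0 <= dot x x.
Proof. by rewrite dotE sumr_ge0 // => i _; rewrite -expr2 sqr_ge0. Qed.

Lemma dot_gt0 x : x != 0 -> 0 < dot x x.
Proof.
move=> hx; rewrite lt_def dot_ge0 andbT; apply/eqP => h.
have [j hj] := nz_coord hx; move: h; rewrite dotE => h.
have hnn : forall i : 'I_n, predT i -> 0 <= x i 0 * x i 0.
  by move=> i _; rewrite -expr2 sqr_ge0.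
have := @psumr_eq0P _ _ predT (fun i => x i 0 * x i 0) hnn h j isT.
by move=> /= hh; move: (mulf_neq0 hj hj); rewrite hh eqxx.
Qed.

Definition onS (S : {set 'I_n}) x := forall i, i \notin S -> x i 0 = 0.

Section Proj.
Variables (S : {set 'I_n}) (w : 'cV[R]_n).
Definition mS (i : 'I_n) : R := (i \in S)%:R.
Definition uS : 'cV[R]_n := \col_i (mS i * w i 0).
Definition cS : R := dot uS uS.
Definition maskS x : 'cV[R]_n := \col_i (mS i * x i 0).
Definition PS : 'M[R]_n := \matrix_(i, j) ((i == j)%:R * mS i - cS^-1 * (uS i 0 * uS j 0)).

Lemma mS2 i : mS i * mS i = mS i.
Proof. by rewrite /mS; case: (i \in S); rewrite ?mulr1 ?mulr0. Qed.

Lemma PSv x : PS *m x = maskS x - (cS^-1 * dot uS x) *: uS.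
Proof.
apply/matrixP => i j; rewrite ord1 !mxE.
under eq_bigr do rewrite mxE mulrBl.
rewrite sumrB (bigD1 i) //= big1 ?addr0; last first.
  by move=> k /negbTE hk; rewrite eq_sym hk mul0r mul0r.
rewrite eqxx mul1r dotE mulr_sumr mulr_suml; congr (_ - _); apply: eq_bigr => k _.
by rewrite /uS !mxE; ring.
Qed.

Lemma dot_mask x : dot w (maskS x) = dot uS x.
Proof. by rewrite !dotE; apply: eq_bigr => i _; rewrite !mxE; ring. Qed.

Lemma dot_wu : dot w uS = cS.
Proof.
rewrite /cS !dotE; apply: eq_bigr => i _; rewrite !mxE.
transitivity (mS i * mS i * (w i 0 * w i 0)); first by rewrite mS2; ring.
ring.
Qed.

Lemma onS_mask x : onS S x -> maskS x = x.
Proof.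
move=> h; apply/matrixP => i j; rewrite ord1 mxE /mS.
by case: (boolP (i \in S)) => hi; rewrite ?mul1r // mul0r h.
Qed.

Lemma dot_uS x : onS S x -> dot uS x = dot w x.
Proof. by move=> h; rewrite -dot_mask onS_mask. Qed.

Hypothesis cpos : 0 < cS.

Lemma PS_onS x : onS S (PS *m x).
Proof.
move=> i hi; rewrite PSv !mxE /mS (negbTE hi) !mul0r mulr0; ring.
Qed.

Lemma PS_orth x : dot w (PS *m x) = 0.
Proof.
rewrite PSv dotBr dotZr dot_mask dot_wu; field; by rewrite gt_eqF.
Qed.

Lemma PS_id x : onS S x -> dot w x = 0 -> PS *m x = x.
Proof.
by move=> h1 h2; rewrite PSv onS_mask // dot_uS // h2 mulr0 scale0r subr0.
Qed.

Lemma PS_idem x : PS *m (PS *m x) = PS *m x.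
Proof. by rewrite (PS_id (PS_onS x) (PS_orth x)). Qed.

Lemma PS_sym : PS^T = PS.
Proof.
apply/matrixP => i j; rewrite !mxE eq_sym.
case: eqVneq => [->|_]; first by [].
by rewrite !mul0r; ring.
Qed.

End Proj.

Lemma X0 A S w : A^T = A -> 0 < cS S w ->
  (forall d, onS S d -> dot w d = 0 -> d != 0 -> 0 < qform A d) ->
  exists x0, onS S x0 /\ dot w x0 = 1 /\
    forall e, onS S e -> dot w e = 0 -> bf A e x0 = 0.
Proof.
move=> sA cpos hpd.
set P := PS S w.
set N := P *m A *m P + (1%:M - P).
have Nv : forall v, N *m v = P *m (A *m (P *m v)) + (v - P *m v).
  by move=> v; rewrite /N mulmxDl mulmxBl mul1mx -!mulmxA.
have NT : N^T = N.
  by rewrite /N linearD /= linearB /= trmx1 !trmx_mul /P PS_sym sA mulmxA.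
have idem : forall x, P *m (P *m x) = P *m x by move=> x; exact: PS_idem.
have uN : N \in unitmx.
  rewrite unitmxE unitfE; apply/negP => /det0P [v hv0 hvN].
  set cv := v^T.
  have Ncv : N *m cv = 0 by rewrite -NT -trmx_mul hvN trmx0.
  have h1 : P *m (A *m (P *m cv)) = 0.
    have := congr1 (mulmx P) Ncv.
    by rewrite Nv mulmxDr mulmxBr !idem subrr addr0 mulmx0.
  set e := P *m cv.
  have qe : qform A e = 0.
    rewrite qformE /bf {1}/e trmx_mul /P PS_sym -!mulmxA.
    by rewrite [P *m _]h1 mulmx0 mxE.
  have e0 : e = 0.
    apply/eqP; apply: contraT => hne.
    by have := hpd e (PS_onS w cv) (PS_orth cpos cv) hne; rewrite qe ltxx.
  have cv0 : cv = 0.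
    by move: Ncv; rewrite Nv h1 -/e e0 subr0 add0r.
  by move: hv0; rewrite -(trmxK v) -/cv cv0 trmx0 eqxx.
set p := (cS S w)^-1 *: uS S w.
set d := invmx N *m (- (P *m (A *m p))).
have Nd : N *m d = - (P *m (A *m p)) by rewrite /d mulKVmx.
have E2 : P *m (A *m (P *m d)) = - (P *m (A *m p)).
  have := congr1 (mulmx P) Nd.
  by rewrite Nv mulmxDr mulmxBr !idem subrr addr0 mulmxN idem.
have dP : P *m d = d.
  move/eqP: Nd; rewrite Nv E2 addrC subr_eq addNr subr_eq0 => /eqP.
  by move=> ->.
have donS : onS S d by rewrite -dP; exact: PS_onS.
have dw : dot w d = 0 by rewrite -dP PS_orth.
exists (p + d); split.
  by move=> i hi; rewrite mxE donS // !mxE /mS (negbTE hi) mul0r mulr0 addr0.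
split.
  by rewrite dotDr dotZr dot_wu dw addr0 mulVf // gt_eqF.
move=> e he1 he2.
rewrite -(PS_id he1 he2) /bf trmx_mul -/P PS_sym -!mulmxA.
by rewrite -/P !mulmxDr -dP E2 mulmxN subrr mxE.
Qed.

Definition Bnd A w S g := forall x, nonneg_vec x -> onS S x -> g * dot w x ^+ 2 <= qform A x.

Lemma minpos (s : seq 'I_n) (Q : 'I_n -> R -> Prop) :
  (forall i g g', 0 < g' -> g' <= g -> Q i g -> Q i g') ->
  (forall i, i \in s -> exists g, 0 < g /\ Q i g) ->
  exists g, 0 < g /\ forall i, i \in s -> Q i g.
Proof.
move=> hmono; elim: s => [|a s IH] h.
  by exists 1; split => // i; rewrite in_nil.
have [g1 [g1p h1]] := IH (fun i hi => h i (introT orP (or_intror hi))).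
have [g2 [g2p h2]] := h a (mem_head _ _).
exists (Order.min g1 g2); split; first by rewrite lt_min g1p g2p.
move=> i; rewrite in_cons => /orP [/eqP ->|hi].
  by apply: hmono h2; rewrite ?lt_min ?g1p ?g2p // ge_min lexx orbT.
by apply: hmono (h1 i hi); rewrite ?lt_min ?g1p ?g2p // ge_min lexx.
Qed.

Lemma Bnd_mono A w S g g' : g' <= g -> Bnd A w S g -> Bnd A w S g'.
Proof.
move=> hg hb x hx hS; apply: le_trans (hb x hx hS).
by apply: ler_wpM2r => //; apply: sqr_ge0.
Qed.

Lemma dot0l x : dot 0 x = 0.
Proof. by rewrite dotC dot0r. Qed.

Lemma onS_neg S x i : onS S x -> x i 0 != 0 -> i \in S.
Proof. by move=> h; apply: contraR => hi; rewrite h // eqxx. Qed.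

Lemma STEP A w (S : {set 'I_n}) : copositive A -> (forall u, is_zero_of A u -> dot w u = 0) ->
  (forall i, i \in S -> exists g, 0 < g /\ Bnd A w (S :\ i) g) ->
  exists g, 0 < g /\ Bnd A w S g.
Proof.
move=> cA hz hIH; have [sA cA'] := cA.
have [gb [gbp Hb]] := minpos (s := enum S) (Q := fun i g => Bnd A w (S :\ i) g)
   (fun i g g' _ hle hb => Bnd_mono hle hb)
   (fun i hi => hIH i ltac:(by rewrite -mem_enum)).
have BD : forall y, nonneg_vec y -> onS S y -> forall i, i \in S -> y i 0 = 0 ->
    gb * dot w y ^+ 2 <= qform A y.
  move=> y hy hyS i hi hyi; apply: (Hb i); rewrite ?mem_enum //.
  move=> j; rewrite in_setD1 negb_and negbK => /orP [/eqP ->|hj]//.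
  exact: hyS.
case: (classic (exists i, i \in S /\ w i 0 != 0)) => [[i0 [hi0 hw0]]|hC0]; last first.
  exists 1; split => // x hx hS.
  have -> : dot w x = 0.
    rewrite dotE big1 // => j _; case: (boolP (j \in S)) => hj; last by rewrite hS // mulr0.
    have : ~~ (w j 0 != 0) by apply/negP => hw; apply: hC0; exists j.
    by rewrite negbK => /eqP ->; rewrite mul0r.
  by rewrite expr0n /= mulr0 cA'.
have cpos : 0 < cS S w.
  apply: dot_gt0; apply/negP => /eqP h; move: (congr1 (fun M : 'cV[R]_n => M i0 0) h).
  by rewrite !mxE /mS hi0 mul1r => /eqP; rewrite (negbTE hw0).
case: (classic (exists d, onS S d /\ dot w d = 0 /\ d != 0 /\ qform A d <= 0)).
  move=> [d [hdS [hdw [hd0 hqd]]]]; exists gb; split => // x hx hxS.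
  have [e [hed [[j hj] hbe]]] := LINE cA hx hd0 hqd.
  have heS : onS S e by case: hed => -> i hi; rewrite ?mxE hdS ?oppr0.
  have hew : dot w e = 0 by case: hed => ->; rewrite ?dotNr hdw ?oppr0.
  have hqe : qform A e <= 0 by case: hed => ->; rewrite ?qN.
  have [t [ht [hy [[i [hi hyi]] _]]]] := EXIT hx (ex_intro _ j hj).
  have hyS : onS S (x + t *: e) by move=> k hk; rewrite !mxE hxS // heS // mulr0 addr0.
  have := BD _ hy hyS i (onS_neg heS (negbT (lt_eqF hi))) hyi.
  rewrite dotDr dotZr hew mulr0 addr0 qDZ // => h.
  have : 0 <= t ^+ 2 by apply: sqr_ge0.
  nra.
move=> hCa.
have hpd : forall d, onS S d -> dot w d = 0 -> d != 0 -> 0 < qform A d.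
  move=> d h1 h2 h3; rewrite ltNge; apply/negP => h4; apply: hCa; by exists d.
have hpsd : forall d, onS S d -> dot w d = 0 -> 0 <= qform A d.
  move=> d h1 h2; case: (eqVneq d 0) => [->|h3]; first by rewrite qformE bf0r.
  exact/ltW/hpd.
have [x0 [hx0S [hx0w hx0e]]] := X0 sA cpos hpd.
case: (ltP 0 (qform A x0)) => hm.
  exists (qform A x0); split => // x hx hxS.
  set s := dot w x; set e := x - s *: x0.
  have heS : onS S e by move=> i hi; rewrite !mxE hxS // hx0S // mulr0 subrr.
  have hew : dot w e = 0 by rewrite /e dotBr dotZr hx0w mulr1 subrr.
  have -> : qform A x = qform A (s *: x0 + e) by rewrite /e addrC subrK.
  rewrite qD // qZ bfZl (bf_sym _ _ sA) hx0e // mulr0 mulr0 addr0.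
  have := hpsd e heS hew; rewrite mulrC; lra.
have nz0 : x0 != 0 by apply/eqP => h; move: hx0w; rewrite h dot0r => /eqP; rewrite eq_sym oner_eq0.
have hnot : forall v, (v = x0 \/ v = - x0) -> ~ nonneg_vec v.
  move=> v hv hvn; have hqv : qform A v = qform A x0 by case: hv => ->; rewrite ?qN.
  have hq0 : qform A v = 0 by apply/eqP; rewrite eq_le cA' // andbT hqv.
  have hv0 : v != 0 by case: hv => ->; rewrite ?oppr_eq0.
  have := hz v (conj hvn (conj (elimN eqP hv0) hq0)).
  case: hv => ->; rewrite ?dotNr hx0w => /eqP; rewrite ?oppr_eq0 oner_eq0 //.
exists gb; split => // x hx hxS.
set s := dot w x.
case: (eqVneq s 0) => [->|hs]; first by rewrite expr0n /= mulr0 cA'.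
have [j hj] : exists j, (s *: x0) j 0 < 0.
  case: (ltrgtP s 0) => hs'; last by move: hs; rewrite hs' eqxx.
    case: (neg_or_nonneg (- x0)) => [[j hj]|h]; last by case: (hnot _ (or_intror erefl) h).
    by exists j; move: hj; rewrite !mxE oppr_lt0 => hj; rewrite nmulr_rlt0.
  case: (neg_or_nonneg x0) => [[j hj]|h]; last by case: (hnot _ (or_introl erefl) h).
  by exists j; rewrite mxE pmulr_rlt0.
set e := s *: x0 - x.
have hej : e j 0 < 0 by rewrite !mxE; move: hj; rewrite !mxE; have := hx j; lra.
have [t [ht [hy [[i [hi hyi]] hmax]]]] := EXIT hx (ex_intro _ j hej).
have heS : onS S e by move=> k hk; rewrite !mxE hxS // hx0S // mulr0 subrr.
have hew : dot w e = 0 by rewrite /e dotBr dotZr hx0w mulr1 subrr.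
have hyS : onS S (x + t *: e) by move=> k hk; rewrite mxE [(t *: e) k 0]mxE hxS // heS // mulr0 addr0.
have hqe := hpsd e heS hew.
have t1 : t <= 1.
  have ej : e j 0 = (s *: x0) j 0 - x j 0 by rewrite /e !mxE.
  have := hmax j hej; have := hx j; nra.
have hqz : qform A (x + e) <= 0.
  rewrite /e addrC subrK qZ; have := sqr_ge0 s; nra.
have := BD _ hy hyS i (onS_neg heS (negbT (lt_eqF hi))) hyi.
rewrite dotDr dotZr hew mulr0 addr0 qDZ // => h.
move: hqz; rewrite qD // => hqz.
have := cA' x hx => hqx.
have h1t : 0 <= 1 - t by rewrite subr_ge0.
have := mulr_ge0 (mulr_ge0 ht h1t) hqe.
have := mulr_ge0 ht hqx.
rewrite -/s in h; have := ler_wpM2l ht hqz; rewrite mulr0; nra.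
Qed.

Lemma MI A w : copositive A -> (forall u, is_zero_of A u -> dot w u = 0) ->
  exists g, 0 < g /\ forall x, nonneg_vec x -> g * dot w x ^+ 2 <= qform A x.
Proof.
move=> cA hz.
suff H : forall m (S : {set 'I_n}), (#|S| <= m)%N -> exists g, 0 < g /\ Bnd A w S g.
  have [g [gp hg]] := H _ setT (leqnn _).
  by exists g; split => // x hx; apply: hg => // i; rewrite inE.
elim=> [|m IH] S hS; apply: STEP => // i hi; have := cardsD1 i S; rewrite hi.
  by move: hS; rewrite leqn0 => /eqP ->.
move=> hc; apply: IH; move: hS; rewrite hc add1n ltnS //.
Qed.

Lemma KER m p (M : 'M[R]_(m, p)) : (m < p)%N -> exists c : 'cV[R]_p, c != 0 /\ M *m c = 0.
Proof.
move=> hmp; set K := kermx M^T.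
have hr : (0 < \rank K)%N.
  rewrite mxrank_ker subn_gt0; apply: leq_ltn_trans hmp; exact: rank_leq_col.
have [r hr0] : exists r, row r K != 0.
  apply: NNPP => h; move: hr; have -> : K = 0.
    apply/row_matrixP => r; rewrite row0; apply/eqP; apply: contraT => hn.
    by case: h; exists r.
  by rewrite mxrank0.
exists (row r K)^T; split; first by rewrite trmx_eq0.
by rewrite -(trmxK M) -trmx_mul -row_mul mulmx_ker row0 trmx0.
Qed.

Definition colmx k (u : 'I_k -> 'cV[R]_n) : 'M[R]_(n, k) := \matrix_(i, j) u j i 0.

Lemma colmxE k (u : 'I_k -> 'cV[R]_n) (c : 'cV[R]_k) :
  colmx u *m c = \sum_j c j 0 *: u j.
Proof.
apply/matrixP => i l; rewrite ord1 !mxE summxE; apply: eq_bigr => j _.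
by rewrite !mxE mulrC.
Qed.

Lemma indep_bound k (u : 'I_k -> 'cV[R]_n) : lin_indep u -> (k <= n)%N.
Proof.
move=> hu; rewrite leqNgt; apply/negP => hnk.
have [c [hc0 hc]] := KER (colmx u) hnk.
move: hc; rewrite colmxE => /(hu (fun j => c j 0)) h.
have c0 : c = 0 by apply/matrixP => i j; rewrite ord1 h mxE.
by rewrite c0 eqxx in hc0.
Qed.

Lemma indep_span (u : 'I_n -> 'cV[R]_n) : lin_indep u ->
  forall x, exists c : 'I_n -> R, x = \sum_i c i *: u i.
Proof.
move=> hu x.
have uU : colmx u \in unitmx.
  rewrite unitmxE unitfE; apply/negP; rewrite -det_tr => /det0P [v hv0 hv].
  have : colmx u *m v^T = 0 by rewrite -(trmxK (colmx u)) -trmx_mul hv trmx0.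
  rewrite colmxE => /(hu (fun j => v^T j 0)) h.
  have v0 : v = 0.
    apply/matrixP => i j; rewrite ord1; transitivity (v^T j 0); first by rewrite [RHS]mxE.
    by rewrite h mxE.
  by rewrite v0 eqxx in hv0.
exists (fun j => (invmx (colmx u) *m x) j 0).
by rewrite -colmxE mulKVmx.
Qed.

Lemma orth k (u : 'I_k -> 'cV[R]_n) : (k < n)%N ->
  exists w : 'cV[R]_n, w != 0 /\ forall i, dot w (u i) = 0.
Proof.
move=> hk; have [w [hw0 hw]] := KER (\matrix_(i, j) u i j 0) hk.
exists w; split => // i; rewrite dotC dotE.
have h := congr1 (fun M : 'cV[R]_k => M i 0) hw; rewrite /= !mxE in h.
apply: (etrans _ h); apply: eq_bigr => j _; by rewrite mxE.
Qed.

Definition ext k (u : 'I_k -> 'cV[R]_n) (v : 'cV[R]_n) (i : 'I_k.+1) : 'cV[R]_n :=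
  if unlift ord_max i is Some j then u j else v.

Lemma ext_widen k (u : 'I_k -> 'cV[R]_n) v (i : 'I_k) : ext u v (widen_ord (leqnSn k) i) = u i.
Proof.
have -> : widen_ord (leqnSn k) i = lift ord_max i by apply: val_inj; rewrite /= /bump leqNgt ltn_ord.
by rewrite /ext liftK.
Qed.

Lemma ext_max k (u : 'I_k -> 'cV[R]_n) v : ext (k := k) u v ord_max = v.
Proof. by rewrite /ext unlift_none. Qed.

Lemma ext_indep k (u : 'I_k -> 'cV[R]_n) v : lin_indep u ->
  ~ (exists c : 'I_k -> R, v = \sum_i c i *: u i) -> lin_indep (ext u v).
Proof.
move=> hu hv c; rewrite big_ord_recr /= ext_max.
under eq_bigr do rewrite ext_widen.
move=> hs.
have hcm : c ord_max = 0.
  apply: NNPP => hc; apply: hv.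
  exists (fun i => - c (widen_ord (leqnSn k) i) / c ord_max).
  apply: (scalerI (introN eqP hc)); rewrite scaler_sumr.
  have -> : c ord_max *: v = - \sum_(i < k) c (widen_ord (leqnSn k) i) *: u i.
    by apply/eqP; rewrite -addr_eq0 addrC hs.
  rewrite -sumrN; apply: eq_bigr => i _; rewrite scalerA -scaleNr; congr (_ *: _).
  by field; apply/eqP.
move: hs; rewrite hcm scale0r addr0 => /hu h i.
case: (unliftP ord_max i) => [j ->|->] //.
by rewrite -(h j); congr c; apply: val_inj; rewrite /= /bump leqNgt ltn_ord.
Qed.

Lemma qsub A M g x : qform (A - g *: M) x = qform A x - g * qform M x.
Proof. by rewrite /qform mulmxBr mulmxBl -scalemxAr -scalemxAl !mxE. Qed.

Lemma psd_ker M u : psd M -> qform M u = 0 -> M *m u = 0.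
Proof.
move=> [sM pM] hq; set y := M *m u.
have hb : bf M u y = dot y y.
  by rewrite /bf /dot /y; have -> : u^T *m M = (M *m u)^T by rewrite trmx_mul sM.
set D := dot y y; set Q := qform M y.
have hQ : 0 <= Q by apply: pM.
have hD : 0 <= D by apply: dot_ge0.
set t := - D / (Q + 1).
have := pM (u + t *: y); rewrite qDZ // hq hb -/D -/Q.
have -> : 0 + 2 * t * D + t ^+ 2 * Q = - (D ^+ 2 * (Q + 2)) / (Q + 1) ^+ 2.
  by rewrite /t; field; rewrite gt_eqF // ltr_wpDl.
rewrite pmulr_lge0 ?invr_gt0 ?exprn_gt0 ?ltr_wpDl // oppr_ge0 => h.
have hD0 : D = 0.
  apply/eqP; rewrite -sqrf_eq0 eq_le sqr_ge0 andbT.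
  by rewrite -(pmulr_lle0 _ (_ : 0 < Q + 2)) // ltr_wpDl.
apply/eqP; apply: contraT => hy; have := dot_gt0 hy; by rewrite -/D hD0 ltxx.
Qed.

Lemma dot_sumr k w (c : 'I_k -> R) (u : 'I_k -> 'cV[R]_n) :
  dot w (\sum_i c i *: u i) = \sum_i c i * dot w (u i).
Proof.
rewrite /dot mulmx_sumr summxE; apply: eq_bigr => i _.
by rewrite -scalemxAr mxE.
Qed.

Lemma EASY A : copositive A -> spans_all (minimal_zero A) -> irreducible_wrt (@psd R n) A.
Proof.
move=> [sA cA] hsp [g [M [gp [pM [M0 [_ cAM]]]]]].
have hMu : forall u, minimal_zero A u -> M *m u = 0.
  move=> u [[hu [_ hqu]] _]; apply: psd_ker => //.
  have := cAM u hu; rewrite qsub hqu sub0r oppr_ge0 => h.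
  case: pM => _ pM; apply/eqP; rewrite eq_le pM andbT.
  by rewrite -(pmulr_rle0 _ gp).
apply: M0; apply/matrixP => i j.
have [k [c [u [hu hx]]]] := hsp (delta_mx j 0).
rewrite [RHS]mxE; transitivity ((M *m (delta_mx j 0 : 'cV[R]_n)) i 0); first by rewrite -colE mxE.
rewrite hx mulmx_sumr summxE big1 // => l _.
by rewrite -scalemxAr hMu // scaler0 mxE.
Qed.

Lemma max_exists (P : nat -> Prop) N : P 0%N -> ~ P N -> exists k, P k /\ ~ P k.+1.
Proof.
move=> P0; elim: N => [|N IH] hN; first by [].
case: (classic (P N)) => h; first by exists N.
exact: IH.
Qed.

Lemma qww w x : qform (w *m w^T) x = dot w x ^+ 2.
Proof.
rewrite /qform mulmxA -mulmxA mxE big_ord1 expr2.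
by congr (_ * _); rewrite -/(dot x w) dotC.
Qed.

End Aux.

Unset Implicit Arguments.

Theorem theorem4p5 (R : rcfType) (n : nat) (A : 'M[R]_n) :
  copositive A ->
  (irreducible_wrt (@psd R n) A <-> spans_all (minimal_zero A)) /\
  (irreducible_wrt (@psd R n) A ->
     exists u : 'I_n -> 'cV[R]_n,
       (forall i, minimal_zero A (u i)) /\ lin_indep u).
Proof.
move=> cA.
pose P := fun k => exists u : 'I_k -> 'cV[R]_n,
  (forall i, minimal_zero A (u i)) /\ lin_indep u.
have P0 : P 0%N.
  by exists (fun _ => 0); split => [[i hi]|c _ [i hi]].
have PN : ~ P n.+1.
  by move=> [u [_ hu]]; have := indep_bound hu; rewrite ltnn.
have [k [[u [hum hui]] hnk]] := max_exists P0 PN.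
have hspan : forall v, minimal_zero A v -> exists c : 'I_k -> R, v = \sum_i c i *: u i.
  move=> v hv; apply: NNPP => h; apply: hnk; exists (ext u v); split.
    by move=> i; rewrite /ext; case: unlift.
  exact: ext_indep.
have hkn := indep_bound hui.
case: (ltngtP k n) => hk; last first.
- subst k.
  have hsp : spans_all (minimal_zero A).
    move=> x; have [c hc] := indep_span hui x.
    by exists n, c, u.
  split; first by split => // _; exact: EASY.
  by move=> _; exists u.
- by move: hkn; rewrite leqNgt hk.
have [w [hw0 hw]] := orth u hk.
have hwm : forall v, minimal_zero A v -> dot w v = 0.
  move=> v /hspan [c ->]; rewrite dot_sumr big1 // => i _; by rewrite hw mulr0.
have hwz := ZO cA hwm.
have [g [gp hg]] := MI cA hwz.
have nirr : ~ irreducible_wrt (@psd R n) A.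
  case: (cA) => sA cA'.
  have MT : (w *m w^T)^T = w *m w^T by rewrite trmx_mul trmxK.
  apply; exists g, (w *m w^T); split => //; split.
    by split => // x; rewrite qww sqr_ge0.
  split.
    move=> h0; have h := qww w w; rewrite h0 /qform mulmx0 mul0mx mxE in h.
    have := mulr_gt0 (dot_gt0 hw0) (dot_gt0 hw0); rewrite -expr2; lra.
  split; first by rewrite linearB /= linearZ /= sA MT.
  by move=> x hx; rewrite qsub qww subr_ge0 hg.
have nspan : ~ spans_all (minimal_zero A).
  move=> hsp; have [m [c [v [hv hx]]]] := hsp w.
  have : dot w w = 0.
    by rewrite {2}hx dot_sumr big1 // => i _; rewrite hwm // mulr0.
  by move=> h; have := dot_gt0 hw0; rewrite h ltxx.
split; first by split => h; [case: nirr | case: nspan].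
by move=> h; case: nirr.
Qed.
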